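(* Let $X$ be a Hausdorff topological space and $\Phi$ a local semiflow on $X$. Let $M\subset X$ be a closed strongly admissible set, and let $\gamma_n$ be a sequence of solutions contained in $M$, each $\gamma_n$ defined on $[-t_n,t_n]$, with $t_n\to\infty$. Then there exist a subsequence $\gamma_{n_k}$ and a full solution $\gamma$ contained in $M$ such that for every compact interval $J\subset\mathbb R$ and every neighborhood $\mathcal V$ of $\mathcal T_\gamma(J)$ in $J\times X$, there exists $k_0$ with $\mathcal T_{\gamma_{n_k}}(J)\subset\mathcal V$ for all $k>k_0$.
   Context: A local semiflow $\Phi$ on $X$ is a continuous map from an open subset $\mathcal D_\Phi\subset\mathbb R^+\times X$ to $X$ such that: (i) for each $x\in X$ there is $T_x\in(0,\infty]$ with $(t,x)\in\mathcal D_\Phi$ iff $t\in[0,T_x)$; (ii) $\Phi(0,x)=x$; (iii) if $(t+s,x)\in\mathcal D_\Phi$ with $t,s\ge0$, then $\Phi(t+s,x)=\Phi(t,\Phi(s,x))$. Write $\Phi(t)x=\Phi(t,x)$, and for $M\subset X$, $J\subset\mathbb R^+$, $\Phi(J)M=\{\Phi(t)x: x\in M,\ t\in J\cap[0,T_x)\}$. A solution on an interval $I\subset\mathbb R$ is a map $\gamma:I\to X$ with $\gamma(t)=\Phi(t-s)\gamma(s)$ for all $s\le t$ in $I$; a full solution is a solution on $\mathbb R$. Its trace on $I$ is $\mathcal T_\gamma(I)=\{(t,\gamma(t)):t\in I\}$. $\Phi$ does not explode in $M$ if $T_x=\infty$ whenever $\Phi([0,T_x))x\subset M$. $M$ is admissible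 if for any sequences $x_n\in M$ and $t_n\to\infty$ with $\Phi([0,t_n])x_n\subset M$ for all $n$, the sequence $\Phi(t_n)x_n$ has a convergent subsequence (in $X$); $M$ is strongly admissible if it is admissible and $\Phi$ does not explode in $M$. Convention: $U$ is a neighborhood of $A$ if $\overline A\subset\mathrm{int}\,U$; $J\times X$ has the product topology. *)

(* Defs.v *)
From HB Require Import structures.
From mathcomp Require Import all_boot all_order all_algebra.
From mathcomp Require Import all_classical all_reals all_analysis.
Set Implicit Arguments. Unset Strict Implicit. Unset Printing Implicit Defensive.
Import Order.TTheory GRing.Theory Num.Theory.
Import numFieldNormedType.Exports.
Local Open Scope classical_set_scope.
Local Open Scope ring_scope.

Section LocalSemiflow.
Context {R : realType} {X : topologicalType}.
(* A local semiflow is encoded by the escape-time function T : X -> \bar R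
   (T x = T_x in (0, +oo]) and a total function Phi : R -> X -> X whose values
   are only meaningful on the domain D_Phi = {(t,x) | 0 <= t < T x}. *)
Variables (T : X -> \bar R) (Phi : R -> X -> X).

Definition semiflow_domain : set (R * X) :=
  [set p | 0 <= p.1 /\ (p.1%:E < T p.2)%E].

Definition is_local_semiflow : Prop :=
  (* D_Phi is open in R^+ x X (product topology, subspace of R x X) *)
  (exists U : set (R * X), open U /\
      semiflow_domain = U `&` [set p | 0 <= p.1]) /\
  {within semiflow_domain, continuous (fun p : R * X => Phi p.1 p.2)} /\
  (forall x, (0 < T x)%E) /\
  (forall x, Phi 0 x = x) /\
  (forall x t s, 0 <= t -> 0 <= s -> ((t + s)%:E < T x)%E ->
     (t%:E < T (Phi s x))%E /\ Phi (t + s) x = Phi t (Phi s x)).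

Definition orbit_img (J : set R) (x : X) : set X :=
  [set Phi t x | t in J `&` [set t | 0 <= t /\ (t%:E < T x)%E]].

Definition is_solution (I : set R) (g : R -> X) : Prop :=
  forall s t, I s -> I t -> s <= t ->
    ((t - s)%:E < T (g s))%E /\ g t = Phi (t - s) (g s).

Definition no_explosion_in (M : set X) : Prop :=
  forall x, orbit_img [set t | 0 <= t] x `<=` M -> T x = +oo%E.

Definition admissible (M : set X) : Prop :=
  forall (x : nat -> X) (t : nat -> R),
    (forall n, M (x n)) -> t @ \oo --> +oo ->
    (forall n, orbit_img [set s | 0 <= s <= t n] (x n) `<=` M) ->
    (forall n, ((t n)%:E < T (x n))%E) ->
    exists (phi : nat -> nat) (y : X),
      (forall m n, (m < n)%N -> (phi m < phi n)%N) /\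
      (fun k => Phi (t (phi k)) (x (phi k))) @ \oo --> y.

Definition strongly_admissible (M : set X) : Prop :=
  admissible M /\ no_explosion_in M.

End LocalSemiflow.

Definition trace {R : realType} {X : Type} (g : R -> X) (I : set R) : set (R * X) :=
  [set p | I p.1 /\ p.2 = g p.1].

(* V is a neighborhood of A in the subspace S of the topological space Y:
   the closure of A relative to S is contained in the interior of V relative to S *)
Definition nbhd_in {Y : topologicalType} (S A V : set Y) : Prop :=
  forall p, (closure A `&` S) p ->
    exists O : set Y, open O /\ O p /\ O `&` S `<=` V.

(* Main.v *)
Require Import Defs.
From HB Require Import structures.
From mathcomp Require Import all_boot all_order all_algebra.
From mathcomp Require Import all_classical all_reals all_analysis.
Import Order.TTheory GRing.Theory Num.Theory.
Import numFieldNormedType.Exports.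
Local Open Scope classical_set_scope.
Local Open Scope ring_scope.

From mathcomp.algebra_tactics Require Import ring lra.
From mathcomp Require Import zify.
From Stdlib Require Import Lia.

Fixpoint mkTheta (f : nat -> nat) (n : nat) : nat :=
  if n is k.+1 then maxn (mkTheta f k).+1 (f k.+1) else f 0%N.

Fixpoint psiseq (th : nat -> nat) (G : nat -> (nat -> nat) -> (nat -> nat))
  (m : nat) : nat -> nat :=
  if m is k.+1 then psiseq th G k \o G k (psiseq th G k) else th.

Definition incr (f : nat -> nat) := forall m n, (m < n)%N -> (f m < f n)%N.

Lemma incr_ge f : incr f -> forall n, (n <= f n)%N.
Proof.
move=> hf; elim=> [//|n IH]; have := hf n n.+1 (ltnSn n); lia.
Qed.

Section Proof.
Variables (R : realType) (X : topologicalType) (T : X -> \bar R) (Phi : R -> X -> X)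
  (M : set X) (gam : nat -> R -> X) (tn : nat -> R).
Hypotheses (HX : hausdorff_space X) (HPhi : is_local_semiflow T Phi) (HM : closed M)
  (HSA : strongly_admissible T Phi M)
  (Hsol : forall n, is_solution T Phi [set s | - tn n <= s <= tn n] (gam n))
  (HgM : forall n s, - tn n <= s <= tn n -> M (gam n s))
  (Htn : tn @ \oo --> +oo).

Lemma T_pos x : (0 < T x)%E.
Proof. by case: HPhi => _ [_ [H _]]. Qed.

Lemma solE n s u : -tn n <= s -> s <= u -> u <= tn n ->
  ((u - s)%:E < T (gam n s))%E /\ gam n u = Phi (u - s) (gam n s).
Proof.
move=> h1 h2 h3; apply: Hsol => //=; apply/andP; split => //; lra.
Qed.

Lemma solM n s : -tn n <= s -> s <= tn n -> M (gam n s).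
Proof. by move=> h1 h2; apply: HgM; apply/andP. Qed.

Definition Igood (psi : nat -> nat) := incr psi /\ forall n, n%:R <= tn (psi n).

Lemma STEP (m : nat) psi : Igood psi -> exists sub (y : X), incr sub /\
  (fun k => gam (psi (sub k)) (- m%:R)) @ \oo --> y.
Proof.
case=> Hinc Hge.
case: HSA => Had _.
pose x n := gam (psi n) (- n%:R).
pose t n := n%:R - m%:R : R.
have n0 : forall n : nat, 0 <= n%:R :> R by move=> n; exact: ler0n.
have := Had x t.
case.
- move=> n; apply: solM; have := Hge n; have := n0 n; lra.
- apply/cvgryPge => A.
  have := cvgr_idn (R:=R); move/cvgryPge => /(_ (A + m%:R)).
  move=> H; apply: (filterS _ H) => n /=; rewrite /t; lra.
- move=> n z [s [/andP [hs1 hs2] [hs3 hs4]] <-].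
  have hn := Hge n; have := n0 n; have := n0 m => h0m h0n.
  have [_ E] := solE (psi n) (- n%:R) (- n%:R + s)
    ltac:(lra) ltac:(lra) ltac:(rewrite /t in hs2; lra).
  have e : - n%:R + s - - n%:R = s by ring.
  rewrite e in E; rewrite /x -E.
  apply: solM; rewrite /t in hs2; lra.
- move=> n; have hn := Hge n; have := n0 n; have := n0 m => h0m h0n.
  case: (leqP m n) => hmn.
  + have hmn' : m%:R <= n%:R :> R by rewrite ler_nat.
    have [hT _] := solE (psi n) (- n%:R) (- m%:R)
      ltac:(lra) ltac:(lra) ltac:(lra).
    by have <- : - m%:R - - n%:R = t n by rewrite /t; ring.
  + have hmn' : n%:R < m%:R :> R by rewrite ltr_nat.
    apply: (lt_trans _ (T_pos (x n))); rewrite lte_fin /t; lra.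
move=> sub [y [hsub hcv]]; exists sub, y; split => //.
apply: cvg_trans hcv; apply: near_eq_cvg.
exists m => // k /= hk.
have hk' := @incr_ge sub hsub k.
have hmk : (m <= sub k)%N by lia.
have hn := Hge (sub k); have := n0 (sub k); have := n0 m => h0m h0n.
have hmn' : m%:R <= (sub k)%:R :> R by rewrite ler_nat.
have [_ ->] := solE (psi (sub k)) (- (sub k)%:R) (- m%:R)
      ltac:(lra) ltac:(lra) ltac:(lra).
by rewrite /t; congr Phi; ring.
Qed.

Lemma LIM (t : R) (y : X) (x : nat -> X): 0 <= t -> (t%:E < T y)%E ->
  x @ \oo --> y ->
  (\forall k \near \oo, semiflow_domain T (t, x k)) /\
  (fun k => Phi t (x k)) @ \oo --> Phi t y.
Proof.
move=> t0 tT Hx.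
case: HPhi => [[U [oU DU]] [Hc _]].
have Dty : semiflow_domain T (t,y) by split.
have Uty : U (t,y) by move: Dty; rewrite DU; case.
have kx : forall B, nbhs (t,y) B -> \forall k \near \oo, B (t, x k).
  move=> B [[A1 A2] /= [h1 h2] sub].
  have HA : \forall k \near \oo, A2 (x k) := Hx A2 h2.
  apply: (filterS _ HA) => k hk; apply: sub; split => //=.
  exact: nbhs_singleton h1.
have DK : \forall k \near \oo, semiflow_domain T (t, x k).
  have : nbhs (t,y) U.
    apply: (@open_nbhs_nbhs _ (t,y) U); split => //.
  move/kx => HU; apply: filterS HU => k Uk; rewrite DU; split => //.
split => //.
move/subspace_continuousP: Hc => /(_ _ Dty) /= Hc.
move=> B hB; have := Hc B hB => /= hw.
have := kx _ hw; apply: filter_app; apply: filterS DK => k Dk; apply; exact Dk.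
Qed.

Section Final.
Variables (phi : nat -> nat) (y : nat -> X).
Hypotheses (P1 : incr phi) (P2 : forall k, k%:R <= tn (phi k))
  (P3 : forall m : nat, (fun k => gam (phi k) (- m%:R)) @ \oo --> y m).

Lemma n0 (n : nat) : 0 <= n%:R :> R. Proof. exact: ler0n. Qed.

Lemma ev_ge (A : R) : exists N : nat, forall k, (N <= k)%N -> A <= tn (phi k).
Proof.
exists (Num.truncn A).+1 => k hk.
have := truncnS_gt A; have : ((Num.truncn A).+1%:R <= k%:R :> R) by rewrite ler_nat.
have := P2 k; lra.
Qed.

Lemma Y1 (m : nat) t : 0 <= t -> (t%:E < T (y m))%E -> M (Phi t (y m)).
Proof.
move=> t0 tT.
have [_ Hc] := LIM _ _ _ t0 tT (P3 m).
apply: (closed_cvg _ HM _ _ Hc).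
have [N HN] := ev_ge (t + m%:R).
exists N => // k /= hk.
have := HN k hk; have := n0 m => h0 h1.
have [_ E] := solE (phi k) (- m%:R) (t - m%:R) ltac:(lra) ltac:(lra) ltac:(lra).
have e : t - m%:R - - m%:R = t by ring.
rewrite e in E; rewrite -E; apply: solM; lra.
Qed.

Lemma Y2 (m : nat) : T (y m) = +oo%E.
Proof.
case: HSA => _ HNE; apply: HNE => z [t [t0 [_ tT]] <-].
exact: Y1.
Qed.

Lemma Y3 (m d : nat) : Phi d%:R (y (m + d)) = y m.
Proof.
have d0 := n0 d.
have dT : (d%:R%:E < T (y (m + d)))%E by rewrite Y2 ltry.
have [_ Hc] := LIM _ _ _ d0 dT (P3 (m + d)).
apply: (cvg_unique HX) (P3 m).
apply: cvg_trans Hc; apply: near_eq_cvg.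
have [N HN] := ev_ge ((m + d)%:R).
exists N => // k /= hk.
have := HN k hk; have := n0 m; rewrite natrD => h0 h1.
have [_ E] := solE (phi k) (- (m + d)%:R) (- m%:R) ltac:(rewrite natrD; lra)
  ltac:(rewrite natrD; lra) ltac:(lra).
have e : - m%:R - - (m + d)%:R = d%:R :> R by rewrite natrD; ring.
by rewrite e in E; rewrite E natrD.
Qed.

Lemma flow_add x t s : 0 <= t -> 0 <= s -> T x = +oo%E ->
  (t%:E < T (Phi s x))%E /\ Phi (t + s) x = Phi t (Phi s x).
Proof.
move=> t0 s0 Tx; case: HPhi => _ [_ [_ [_ H]]]; apply: H => //.
by rewrite Tx ltry.
Qed.

Lemma EQ (m1 d : nat) s : 0 <= s + m1%:R ->
  Phi (s + (m1 + d)%:R) (y (m1 + d)) = Phi (s + m1%:R) (y m1).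
Proof.
move=> h.
have [_ E] := flow_add (y (m1 + d)) (s + m1%:R) d%:R h (n0 d) (Y2 _).
rewrite Y3 in E; rewrite -E natrD; congr Phi; ring.
Qed.

Definition mm (s : R) : nat := (Num.truncn (- s)).+1.

Lemma mm_pos s : 0 < s + (mm s)%:R.
Proof. have := truncnS_gt (- s); rewrite /mm; lra. Qed.

Definition g (s : R) : X := Phi (s + (mm s)%:R) (y (mm s)).

Lemma G1 (m : nat) s : 0 <= s + m%:R -> g s = Phi (s + m%:R) (y m).
Proof.
move=> h; rewrite /g; have h2 := ltW (mm_pos s).
case: (leqP m (mm s)) => hm.
  by rewrite -(subnKC hm) EQ // subnKC.
have hm' := ltnW hm.
by rewrite -(subnKC hm') EQ.
Qed.

Lemma G2 s : M (g s).
Proof.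
rewrite /g; apply: Y1; first exact: ltW (mm_pos s).
by rewrite Y2 ltry.
Qed.

Lemma G3 : is_solution T Phi setT g.
Proof.
move=> s t _ _ st.
have h := ltW (mm_pos s).
have ts : 0 <= t - s by lra.
have [lt E] := flow_add (y (mm s)) (t - s) (s + (mm s)%:R) ts h (Y2 _).
split => //.
rewrite (G1 (mm s)); last by lra.
rewrite -E; congr Phi; ring.
Qed.

Lemma G4 (a b : R) (V : set (R * X)) :
  let J := [set s | a <= s <= b] in
  V `<=` J `*` setT ->
  nbhd_in (J `*` setT) (trace g J) V ->
  exists k0 : nat, forall k, (k0 < k)%N -> trace (gam (phi k)) J `<=` V.
Proof.
move=> J HV Hn.
pose m := mm a.
have am := mm_pos a.
have cJ : compact J.
  have := @segment_compact R a b; rewrite set_itvcc; exact.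
suff : \forall k \near \oo, J `<=` (fun s => V (s, gam (phi k) s)).
  case=> N _ HN; exists N => k hk [s z] [/= Js Ez]; rewrite /= in Ez; subst z.
  apply: (HN k) => //=; lia.
apply: ((near_covering_withinP J).2 ((compact_near_coveringP J).1 cJ)).
move=> s Js.
have [OO [oOO [OOs HO]]] : exists OO : set (R * X), open OO /\ OO (s, g s) /\ OO `&` (J `*` setT) `<=` V.
  apply: Hn; split; last by split.
  by apply: subset_closure; split.
have : nbhs (s, g s) OO by apply: open_nbhs_nbhs; split.
case=> [[A1 A2] /= [hA1 hA2] subO].
have gs : g s = Phi (s + m%:R) (y m).
  apply: G1; move: Js => /andP [h1 _]; rewrite /m; lra.
have Dq : semiflow_domain T (s + m%:R, y m).
  split => /=; last by rewrite Y2 ltry.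
  move: Js => /andP [h1 _]; rewrite /m; lra.
case: HPhi => _ [Hc _].
move/subspace_continuousP: Hc => /(_ _ Dq) /= Hc.
rewrite gs in hA2.
have := Hc A2 hA2 => /= hw.
case: hw => [[B1 B2] /= [hB1 hB2] subB].
have hB1' : \forall s' \near s, B1 (s' + m%:R).
  have : (fun s' => s' + m%:R) @ s --> s + m%:R.
    by apply: cvgD; [exact: cvg_id | exact: cvg_cst].
  by move/(_ B1 hB1).
case: (P3 m B2 hB2) => N1 _ hN1.
pose N2 := (Num.truncn b).+1.
exists (A1 `&` [set s' | B1 (s' + m%:R)], [set k | (maxn N1 (maxn N2 m) <= k)%N]).
  split => /=; first exact: filterI.
  by exists (maxn N1 (maxn N2 m)).
move=> [s' k] /= [[hA1' hB1''] hk] Js'.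
have hk1 : (N1 <= k)%N by lia.
have hk2 : (N2 <= k)%N by lia.
have hk3 : (m <= k)%N by lia.
have tk := P2 k.
have bk : b <= k%:R.
  have := truncnS_gt b; have : (N2%:R <= k%:R :> R) by rewrite ler_nat.
  rewrite /N2; lra.
have mk : m%:R <= k%:R :> R by rewrite ler_nat.
move: Js' => /andP [hs1 hs2].
have [lt E] := solE (phi k) (- m%:R) s' ltac:(lra) ltac:(rewrite /m in am *; lra) ltac:(lra).
have e : s' - - m%:R = s' + m%:R by ring.
rewrite e in lt E.
have hA2' : A2 (gam (phi k) s').
  rewrite E; apply: (subB (s' + m%:R, gam (phi k) (- m%:R))).
    by split => //=; apply: hN1.
  by split => //=; rewrite /m in am *; lra.
apply: HO; split; first by apply: subO; split.
by split => //=; apply/andP.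
Qed.

End Final.

Lemma DIAG : exists (phi : nat -> nat) (y : nat -> X), incr phi /\
  (forall k, k%:R <= tn (phi k)) /\
  (forall m : nat, (fun k => gam (phi k) (- m%:R)) @ \oo --> y m).
Proof.
have [f hf] : {f : nat -> nat & forall n j, (f n <= j)%N -> n%:R <= tn j}.
  apply: (@choice _ _ (fun n N => forall j, (N <= j)%N -> n%:R <= tn j)) => n.
  move/cvgryPge: Htn => /(_ n%:R) [N _ HN]; exists N => j hj; exact: HN.
pose th := mkTheta f.
have Hth : Igood th.
  split.
    apply: (homo_ltn ltn_trans) => i /=; exact: leq_maxl.
  move=> n; apply: hf; case: n => [//|n] /=; exact: leq_maxr.
have [G HG] : exists G : nat -> (nat -> nat) -> (nat -> nat) * X,
    forall m psi, Igood psi -> incr (G m psi).1 /\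
    (fun k => gam (psi ((G m psi).1 k)) (- m%:R)) @ \oo --> (G m psi).2.
  have : forall mp : nat * (nat -> nat), exists r : (nat -> nat) * X,
      Igood mp.2 -> incr r.1 /\
      (fun k => gam (mp.2 (r.1 k)) (- mp.1%:R)) @ \oo --> r.2.
    move=> mp; case: (pselect (Igood mp.2)) => h.
      by have [sub [y0 H]] := STEP mp.1 mp.2 h; exists (sub, y0).
    by exists (id, gam 0%N 0).
  move/choice => [e he]; exists (fun m psi => e (m, psi)) => m psi h.
  exact: (he (m, psi) h).
pose ps := psiseq th (fun m psi => (G m psi).1).
have Hps : forall m, Igood (ps m).
  elim => [//|m IH] /=; case: (HG m _ IH) => hinc _.
  split.
    by move=> i j hij; apply: IH.1; apply: hinc.
  move=> n; apply: le_trans (IH.2 _); rewrite ler_nat; exact: incr_ge.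
have comp : forall d m, exists c : nat -> nat, (forall j, j <= c j)%N /\
    forall j, ps (m + d)%N j = ps m (c j).
  elim => [|d IH] m.
    by exists id; split => // j; rewrite addn0.
  have [c [hc1 hc2]] := IH m.
  exists (c \o (G (m + d)%N (ps (m + d)%N)).1); split.
    move=> j /=; have := @incr_ge _ (HG (m + d)%N _ (Hps (m + d)%N)).1 j.
    have := hc1 ((G (m + d)%N (ps (m + d)%N)).1 j); lia.
  by move=> j; rewrite addnS; exact: hc2.
exists (fun k => ps k k), (fun m => (G m (ps m)).2); split; [|split].
- apply: (homo_ltn ltn_trans) => i /=; apply: (Hps i).1.
  exact: leq_trans (ltnSn i) (@incr_ge _ (HG i _ (Hps i)).1 i.+1).
- by move=> k; exact: (Hps k).2.
- move=> m B hB; have [_ cv] := HG m _ (Hps m).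
  case: (cv B hB) => N _ hN.
  exists (maxn N m.+1) => // k hk /=.
  have [c [hc1 hc2]] := comp (k - m.+1)%N m.+1.
  have hmk : (m.+1 <= k)%N by move: hk => /= hk; lia.
  have := hc2 k; rewrite subnKC // => ->.
  apply: hN => /=; move: hk => /= hk; have := hc1 k; lia.
Qed.

Lemma main_sec : exists (phi : nat -> nat) (g : R -> X),
    (forall m n, (m < n)%N -> (phi m < phi n)%N) /\
    is_solution T Phi setT g /\
    (forall s, M (g s)) /\
    (forall (a b : R) (V : set (R * X)),
       let J := [set s | a <= s <= b] in
       V `<=` J `*` setT ->
       nbhd_in (J `*` setT) (trace g J) V ->
       exists k0 : nat, forall k, (k0 < k)%N -> trace (gam (phi k)) J `<=` V).
Proof.
have [phi [y [P1 [P2 P3]]]] := DIAG.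
exists phi, (g y); split => //; split; first exact: G3.
split; first exact: G2.
exact: G4.
Qed.

End Proof.

Theorem proposition2p8 (R : realType) (X : topologicalType)
  (T : X -> \bar R) (Phi : R -> X -> X) (M : set X)
  (gam : nat -> R -> X) (tn : nat -> R) :
  hausdorff_space X ->
  is_local_semiflow T Phi ->
  closed M ->
  strongly_admissible T Phi M ->
  (forall n, is_solution T Phi [set s | - tn n <= s <= tn n] (gam n)) ->
  (forall n s, - tn n <= s <= tn n -> M (gam n s)) ->
  tn @ \oo --> +oo ->
  exists (phi : nat -> nat) (g : R -> X),
    (forall m n, (m < n)%N -> (phi m < phi n)%N) /\
    is_solution T Phi setT g /\
    (forall s, M (g s)) /\
    (forall (a b : R) (V : set (R * X)),
       let J := [set s | a <= s <= b] in
       V `<=` J `*` setT ->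
       nbhd_in (J `*` setT) (trace g J) V ->
       exists k0 : nat, forall k, (k0 < k)%N -> trace (gam (phi k)) J `<=` V).
Proof.
move=> HX HPhi HM HSA Hsol HgM Htn.
exact: (@main_sec R X T Phi M gam tn HX HPhi HM HSA Hsol HgM Htn).
Qed.
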